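(* For $\mathbf p\in\mathbb R^k$ with all $p_j>0$ and $\sum_jp_j=1$, define $$R(\mathbf p)=\frac{\|\mathbf p\|_{1/2}^{1/2}}{\|\mathbf p\|_{2/3}},\qquad\text{where }\|\mathbf p\|_r=\Big(\sum_{j=1}^kp_j^r\Big)^{1/r}.$$ Then $R(\mathbf p)\ge1$ for every such $\mathbf p$, and $\sup_{\mathbf p}R(\mathbf p)\in\Theta(k^{1/4})$, the supremum taken over all probability vectors in $\mathbb R^k$ with positive entries; this order is tight. *)

(* Defs.v *)
From HB Require Import structures.
From mathcomp Require Import all_boot all_order all_algebra.
From mathcomp Require Import all_classical all_reals all_analysis.
Set Implicit Arguments. Unset Strict Implicit. Unset Printing Implicit Defensive.
Import Order.TTheory GRing.Theory Num.Theory.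
Local Open Scope ring_scope.
Local Open Scope classical_set_scope.

Definition pnorm (R : realType) (k : nat) (r : R) (p : 'I_k -> R) : R :=
  (\sum_(j < k) p j `^ r) `^ r^-1.

Definition Rratio (R : realType) (k : nat) (p : 'I_k -> R) : R :=
  pnorm (1 / 2) p `^ (1 / 2) / pnorm (2 / 3) p.

Definition probvec (R : realType) (k : nat) (p : 'I_k -> R) : Prop :=
  (forall j, 0 < p j) /\ \sum_(j < k) p j = 1.

Definition Rsup (R : realType) (k : nat) : R :=
  sup [set Rratio p | p in [set p : 'I_k -> R | probvec p]].

(* Main.v *)
Require Import Defs.
From HB Require Import structures.
From mathcomp Require Import all_boot all_order all_algebra.
From mathcomp Require Import all_classical all_reals all_analysis.
From mathcomp Require Import ring lra.
Import Order.TTheory GRing.Theory Num.Theory.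
Local Open Scope ring_scope.

Section H.
Variable R : realType.

Lemma pwn (x r : R) (n : nat) : (x `^ r) ^+ n = x `^ (r * n%:R).
Proof. by rewrite powRrM powR_mulrn // powR_ge0. Qed.

Lemma pwpow (y r : R) n : 0 <= y -> (y ^+ n) `^ r = y `^ (n%:R * r).
Proof. by move=> y0; rewrite -powR_mulrn // -powRrM. Qed.

Lemma RratioE k (p : 'I_k -> R) : (forall j, 0 <= p j) ->
  Rratio p = (\sum_(j < k) p j `^ (1/2)) / (\sum_(j < k) p j `^ (2/3)) `^ (3/2).
Proof.
move=> p0; rewrite /Rratio /pnorm -powRrM.
have -> : (1 / 2 : R)^-1 * (1 / 2) = 1 by rewrite mulVf.
rewrite powRr1; last by apply: sumr_ge0 => j _; exact: powR_ge0.
congr (_ / _ `^ _); rewrite invf_div; lra.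
Qed.

Lemma core (k : nat) (q : 'I_k -> R) : (forall j, 0 <= q j) ->
  \sum_(j < k) q j ^+ 6 = 1 ->
  [/\ 1 <= \sum_(j < k) q j ^+ 4,
      (\sum_(j < k) q j ^+ 4) `^ (3/2) <= \sum_(j < k) q j ^+ 3 &
      \sum_(j < k) q j ^+ 3 <= k%:R `^ (1/4) * (\sum_(j < k) q j ^+ 4) `^ (3/2)].
Proof.
move=> q0 S6.
have k0 : (0 < k)%N.
  by move: S6; case: (k) q {q0} => [|//] q; rewrite big_ord0 => /eqP; rewrite eq_sym oner_eq0.
have q1 j : q j <= 1.
  rewrite -(expr_le1 (n:=6)) // -S6 (bigD1 j) //= lerDl.
  by apply: sumr_ge0 => i _; rewrite exprn_ge0.
have S4g : \sum_(j < k) q j ^+ 6 <= \sum_(j < k) q j ^+ 4.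
  apply: ler_sum => j _; have := q0 j; have := q1 j => a b.
  rewrite (_ : q j ^+ 6 = q j ^+ 4 * (q j * q j)); last by ring.
  by rewrite ler_piMr ?exprn_ge0 //; nra.
have S3g : \sum_(j < k) q j ^+ 6 <= \sum_(j < k) q j ^+ 3.
  apply: ler_sum => j _; have := q0 j; have := q1 j => a b.
  rewrite (_ : q j ^+ 6 = q j ^+ 3 * (q j ^+ 3)); last by ring.
  rewrite ler_piMr ?exprn_ge0 // expr_le1 //.
rewrite S6 in S4g S3g.
set S4 := \sum_(j < k) q j ^+ 4 in S4g *.
set S3 := \sum_(j < k) q j ^+ 3 in S3g *.
split => //.
- set mu := S3 `^ (1/3).
  have mu3 : mu ^+ 3 = S3 by rewrite pwn (_ : 1/3 * 3%:R = 1) ?powRr1 //; [lra | field].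
  have mu0 : 0 <= mu by exact: powR_ge0.
  have mu1 : 1 <= mu.
    have h := @ge0_ler_powR R (1/3) ltac:(lra) 1 S3.
    by move: h; rewrite powR1 /= => ->; rewrite ?nnegrE //; lra.
  have : 3 * mu * S4 <= 2 * S3 + mu ^+ 3 * \sum_(j < k) q j ^+ 6.
    rewrite /S4 /S3 mulr_sumr mulr_sumr mulr_sumr -big_split /=.
    apply: ler_sum => j _.
    have h : 0 <= q j ^+ 3 * (mu * q j - 1) ^+ 2 * (mu * q j + 2).
      have := q0 j => ?.
      apply: mulr_ge0; [apply: mulr_ge0; [exact: exprn_ge0 | exact: sqr_ge0] | nra].
    rewrite -subr_ge0; apply: (le_trans h); rewrite le_eqVlt; apply/orP; left.
    apply/eqP; ring.
  rewrite S6 -mu3 => h.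
  have S4mu : S4 <= mu ^+ 2.
    move: h; rewrite (_ : mu ^+ 3 = mu * mu ^+ 2); last by ring.
    set m2 := mu ^+ 2 => h; nra.
  apply: (@le_trans _ _ ((mu ^+ 2) `^ (3/2))).
    apply: ge0_ler_powR => //; rewrite ?nnegrE ?exprn_ge0; lra.
  rewrite pwpow // (_ : 2%:R * (3/2) = 3%:R); last by field.
  by rewrite powR_mulrn // mu3.
-   set t := (k%:R : R) `^ (1/4).
  have t4 : t ^+ 4 = k%:R by rewrite pwn (_ : 1/4 * 4%:R = 1) ?powRr1 //; field.
  have t0 : 0 < t by apply: powR_gt0; rewrite ltr0n.
  set s := S4 `^ (1/4).
  have s4 : s ^+ 4 = S4 by rewrite pwn (_ : 1/4 * 4%:R = 1) ?powRr1 //; [lra | field].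
  have s1 : 1 <= s.
    have h1 := @ge0_ler_powR R (1/4) ltac:(lra) 1 S4.
    by move: h1; rewrite powR1 /= => ->; rewrite ?nnegrE //; lra.
  have : 4 * t ^+ 3 * s * S3 <= 3 * t ^+ 4 * S4 + \sum_(j < k) s ^+ 4.
    rewrite /S4 /S3 mulr_sumr mulr_sumr -big_split /=.
    apply: ler_sum => j _.
    have := q0 j => ?.
    have hh : 0 <= (t * q j - s) ^+ 2 * (3 * (t * q j) ^+ 2 + 2 * (t * q j) * s + s ^+ 2).
      apply: mulr_ge0; first exact: sqr_ge0.
      have : 0 <= t * q j by nra.
      set a := t * q j => ?; nra.
    rewrite -subr_ge0; apply: (le_trans hh); rewrite le_eqVlt; apply/orP; left.
    apply/eqP; ring.
  rewrite sumr_const card_ord -[s ^+ 4 *+ k]mulr_natr -t4 -s4 => h.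
  have S3b : S3 <= t * s ^+ 3.
    have p0 : 0 < 4 * t ^+ 3 * s by rewrite !mulr_gt0 ?exprn_gt0 //; lra.
    rewrite -(ler_pM2l p0); apply: (le_trans h).
    rewrite le_eqVlt; apply/orP; left; apply/eqP; ring.
  apply: (le_trans S3b).
  rewrite pwpow ?powR_ge0 // (_ : 4%:R * (3/2) = 6%:R); last by field.
  rewrite powR_mulrn ?powR_ge0 //.
  rewrite ler_pM2l // (_ : s ^+ 6 = s ^+ 3 * s ^+ 3); last by ring.
  by rewrite ler_peMr ?exprn_ege1 ?exprn_ge0 //; lra.
Qed.

Lemma qlem (x r : R) n : 0 <= x -> r = 1/6 * n%:R -> x `^ r = (x `^ (1/6)) ^+ n.
Proof. by move=> x0 ->; rewrite pwn. Qed.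

Lemma ratio_bounds k (p : 'I_k -> R) : probvec p ->
  1 <= Rratio p /\ Rratio p <= (k%:R : R) `^ (1/4).
Proof.
move=> [pp ps].
have p0 j : 0 <= p j by exact: ltW.
rewrite RratioE //.
set q := fun j => p j `^ (1/6).
have E3 : \sum_(j < k) p j `^ (1/2) = \sum_(j < k) q j ^+ 3.
  by apply: eq_bigr => j _; rewrite (qlem (p j) _ 3 (p0 j)) //; field.
have E4 : \sum_(j < k) p j `^ (2/3) = \sum_(j < k) q j ^+ 4.
  by apply: eq_bigr => j _; rewrite (qlem (p j) _ 4 (p0 j)) //; field.
have E6 : \sum_(j < k) q j ^+ 6 = 1.
  rewrite -[in RHS]ps; apply: eq_bigr => j _; rewrite /q pwn (_ : 1/6 * 6%:R = 1); [by rewrite powRr1 | by field].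
have q0 j : 0 <= q j by exact: powR_ge0.
have [S4g h1 h2] := @core k q q0 E6.
rewrite E3 E4.
have X0 : 0 < (\sum_(j < k) q j ^+ 4) `^ (3/2) by apply: powR_gt0; lra.
by split; [rewrite ler_pdivlMr // mul1r | rewrite ler_pdivrMr].
Qed.

Lemma witness k : (2 <= k)%N ->
  exists w : 'I_k -> R, probvec w /\ 1/8 * ((k%:R : R) `^ (1/4)) <= Rratio w.
Proof.
move=> k2.
have k0 : (0 < k)%N by apply: leq_trans k2.
have kr2 : (2 : R) <= k%:R by rewrite ler_nat.
set t := (k%:R : R) `^ (1/4).
have t4 : t ^+ 4 = k%:R by rewrite pwn (_ : 1/4 * 4%:R = 1) ?powRr1 //; field.
have t1 : 1 <= t.
  have h1 := @ge0_ler_powR R (1/4) ltac:(lra) 1 k%:R.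
  by move: h1; rewrite powR1 /= => ->; rewrite ?nnegrE //; lra.
set u := t^-1.
have tu : t * u = 1 by rewrite /u mulfV //; apply/eqP => t0; lra.
have u0 : 0 < u by rewrite /u invr_gt0; lra.
have u1 : u <= 1 by rewrite /u invf_le1; lra.
have ku : k%:R * u ^+ 4 = 1 by rewrite -t4 -exprMn tu expr1n.
set e := u ^+ 6.
have e0 : 0 < e by rewrite exprn_gt0.
set i0 : 'I_k := Ordinal k0.
set a := 1 - (k.-1)%:R * e.
have km : (k.-1)%:R = (k%:R : R) - 1 by rewrite -subn1 natrB.
have a0 : 0 < a.
  rewrite /a km /e (_ : u ^+ 6 = u ^+ 4 * u ^+ 2); last by ring.
  have : 0 < u ^+ 4 * u ^+ 2 by rewrite mulr_gt0 ?exprn_gt0.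
  have : u ^+ 2 <= 1 by rewrite expr_le1 //; lra.
  move: ku; set v := u ^+ 4; set x := u ^+ 2 => ku h2 h3.
  have -> : 1 - (k%:R - 1) * (v * x) = 1 - (k%:R * v) * x + v * x by ring.
  rewrite ku; lra.
have a1 : a <= 1 by rewrite /a lerBlDr lerDl mulr_ge0 // ltW.
set w := fun j : 'I_k => if j == i0 then a else e.
have wi0 : w i0 = a by rewrite /w eqxx.
have wj j : j != i0 -> w j = e by rewrite /w => /negbTE ->.
have sumo (f : R -> R) : \sum_(j < k) f (w j) = f a + (k.-1)%:R * f e.
  rewrite (bigD1 i0) //= wi0; congr (_ + _).
  rewrite (eq_bigr (fun=> f e)); last by move=> j /wj ->.
  by rewrite sumr_const cardC1 card_ord mulr_natl.
exists w; split.
  split; first by move=> j; rewrite /w; case: ifP.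
  by have := sumo id => /= ->; rewrite /a subrK.
have w0 j : 0 <= w j by rewrite /w; case: ifP => _; apply: ltW.
rewrite RratioE // (sumo (fun x => x `^ (1/2))) (sumo (fun x => x `^ (2/3))).
have e12 : e `^ (1/2) = u ^+ 3.
  rewrite /e pwpow ?ltW // (_ : 6%:R * (1/2) = 3%:R); last by field.
  by rewrite powR_mulrn // ltW.
have e23 : e `^ (2/3) = u ^+ 4.
  rewrite /e pwpow ?ltW // (_ : 6%:R * (2/3) = 4%:R); last by field.
  by rewrite powR_mulrn // ltW.
rewrite e12 e23.
have a23 : a `^ (2/3) <= 1.
  have h1 := @ge0_ler_powR R (2/3) ltac:(lra) a 1.
  by move: h1; rewrite powR1 /=; apply; rewrite ?nnegrE //; lra.
set S2 := a `^ (2/3) + _.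
have S2le : S2 <= 2.
  rewrite /S2 km; have : 0 < u ^+ 4 by rewrite exprn_gt0.
  move: ku; set v := u ^+ 4 => ku hv.
  have -> : (k%:R - 1) * v = k%:R * v - v by ring.
  rewrite ku; lra.
have S2g : 0 < S2 by rewrite /S2 ltr_pwDl ?powR_gt0 // mulr_ge0 ?exprn_ge0 ?ltW // km; lra.
have X4 : S2 `^ (3/2) <= 4.
  apply: (@le_trans _ _ (2 `^ (3/2))).
    by apply: ge0_ler_powR; rewrite ?nnegrE //; lra.
  apply: (@le_trans _ _ (2 `^ (2%:R))).
    by apply: ler_powR; lra.
  by rewrite powR_mulrn // expr2; lra.
have X0 : 0 < S2 `^ (3/2) by apply: powR_gt0.
rewrite ler_pdivlMr //.
apply: (@le_trans _ _ ((k.-1)%:R * u ^+ 3)); last first.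
  by rewrite lerDr powR_ge0.
apply: (@le_trans _ _ (1/8 * t * 4)).
  by rewrite ler_pM2l //; apply: mulr_gt0; lra.
rewrite km.
have ht : t = t ^+ 4 * u ^+ 3 by rewrite (_ : t ^+ 4 * u ^+ 3 = t * (t * u) ^+ 3); [rewrite tu expr1n mulr1 | ring].
rewrite [X in 1/8 * X * 4]ht t4.
have : 0 < u ^+ 3 by rewrite exprn_gt0.
set y := u ^+ 3 => hy.
rewrite -subr_ge0.
have -> : (k%:R - 1) * y - 1 / 8 * (k%:R * y) * 4 = (k%:R / 2 - 1) * y by field.
apply: mulr_ge0; lra.
Qed.
End H.

Theorem lemma5 (R : realType) :
  (forall (k : nat) (p : 'I_k -> R), probvec p -> 1 <= Rratio p) /\
  (exists (c C : R) (K : nat), 0 < c /\ 0 < C /\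
     forall k : nat, (K <= k)%N ->
       c * (k%:R `^ (1 / 4)) <= Rsup R k /\ Rsup R k <= C * (k%:R `^ (1 / 4))).
Proof.
split; first by move=> k p hp; have [] := @ratio_bounds R _ p hp.
exists (1/8), 1, 2%N; split; first lra; split; first lra.
move=> k k2.
have [w [hw lw]] := @witness R k k2.
have ub : ubound [set Rratio p | p in [set p : 'I_k -> R | probvec p]] ((k%:R : R) `^ (1/4)).
  by move=> y [p hp <-]; have [] := @ratio_bounds R _ p hp.
split.
  apply: (le_trans lw); apply: ub_le_sup; first by exists ((k%:R : R) `^ (1/4)).
  by exists w.
rewrite mul1r; apply: ge_sup => //; by exists (Rratio w), w.
Qed.
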